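(* Let $T$ be a rank-$r$ tensor and $t$ a rank-$s$ tensor, and let $1\le i\le r$, $1\le j\le s$. If $T,t\in\mathcal{DP}$, or if $T,t\in-\mathcal{DP}$, then $(T\,{}_i\!\times_j t)\in\mathcal{DP}$. If $T\in\mathcal{DP}$ and $t\in-\mathcal{DP}$, then $(T\,{}_i\!\times_j t)\in-\mathcal{DP}$ and $(t\,{}_j\!\times_i T)\in-\mathcal{DP}$.
   Context: Lorentzian metric of signature $(+,-,\dots,-)$ with time orientation; causal: $v\ne0$, $v\cdot v\ge0$. $\mathcal{DP}$: tensors $X_{a_1\dots a_m}$ with $X_{a_1\dots a_m}u_1^{a_1}\cdots u_m^{a_m}\ge0$ for all causal future-pointing $u_k$ (rank 0: non-negative reals); $-\mathcal{DP}=\{X:-X\in\mathcal{DP}\}$. The product $(T\,{}_i\!\times_j t)_{a_1\dots a_{r+s-2}}=T_{a_1\dots a_{i-1}ba_i\dots a_{r-1}}\,t_{a_r\dots a_{r+j-2}}{}^{b}{}_{a_{r+j-1}\dots a_{r+s-2}}$ contracts the $i$-th index of $T$ with the $j$-th index of $t$. *)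

(* Defs.v *)
From HB Require Import structures.
From mathcomp Require Import all_boot all_order all_algebra.
Set Implicit Arguments. Unset Strict Implicit. Unset Printing Implicit Defensive.
Import Order.TTheory GRing.Theory Num.Theory.
Local Open Scope ring_scope.

(* Minkowski space of dimension d = n.+1 with orthonormal basis e_0,...,e_n,
   metric eta = diag(+1,-1,...,-1); index 0 is the time direction. *)

Section Lorentz.
Variable R : realFieldType.
Variable n : nat.
Notation d := n.+1.

Definition eta (k : 'I_d) : R := if k == ord0 then 1 else -1.

(* a vector (contravariant components u^a) *)
Definition vec := 'I_d -> R.

Definition mdot (u v : vec) : R := \sum_(k < d) eta k * u k * v k.

Definition causal (u : vec) : Prop := (exists k, u k != 0) /\ 0 <= mdot u u.

Definition future_causal (u : vec) : Prop := causal u /\ 0 < u ord0.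

(* covariant tensor of rank m: components X_{a_1 ... a_m} indexed by
   an assignment of basis indices to the m slots *)
Definition tensor (m : nat) := {ffun 'I_m -> 'I_d} -> R.

Definition teval (m : nat) (X : tensor m) (u : 'I_m -> vec) : R :=
  \sum_(f : {ffun 'I_m -> 'I_d}) X f * \prod_(k < m) u k (f k).

Definition DP (m : nat) (X : tensor m) : Prop :=
  forall u : 'I_m -> vec, (forall k, future_causal (u k)) -> 0 <= teval X u.

Definition negDP (m : nat) (X : tensor m) : Prop := DP (fun f => - X f).

Definition ins (m : nat) (i : 'I_m.+1) (b : 'I_d) (g : 'I_m -> 'I_d) :
  {ffun 'I_m.+1 -> 'I_d} :=
  [ffun k => match unlift i k with None => b | Some k' => g k' end].

(* (T _i x_j t): contract slot i of T (rank r.+1) with slot j of t (rank s.+1);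
   the free indices of T come first, then those of t; the contracted index is
   raised with the inverse metric eta^{bb} = eta_{bb}. Slots are 0-based. *)
Definition tprod (r s : nat) (T : tensor r.+1) (t : tensor s.+1)
    (i : 'I_r.+1) (j : 'I_s.+1) : tensor (r + s) :=
  fun f => \sum_(b < d)
    eta b * T (ins i b (fun k => f (lshift s k)))
          * t (ins j b (fun k => f (rshift r k))).

End Lorentz.

(* Main.v *)
Set Warnings "-all".
Set Implicit Arguments. Unset Strict Implicit.
Require Import Defs.
From mathcomp Require Import all_boot all_order all_algebra.
From mathcomp Require Import ring lra.
Import Order.TTheory GRing.Theory Num.Theory.
Local Open Scope ring_scope.

Lemma eta0 (R : realFieldType) (n : nat) : eta R (@ord0 n) = 1.
Proof. by rewrite /eta eqxx. Qed.
Lemma etaL (R : realFieldType) (n : nat) (k : 'I_n) : eta R (lift ord0 k) = -1.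
Proof. by rewrite /eta eq_sym (negbTE (neq_lift _ _)). Qed.

Lemma key (R : realFieldType) (n : nat) (A B : 'I_n.+1 -> R) :
 (forall v : vec R n, future_causal v -> 0 <= \sum_b v b * A b) ->
 (forall v : vec R n, future_causal v -> 0 <= \sum_b v b * B b) ->
 0 <= \sum_b eta R b * A b * B b.
Proof.
move=> hA hB.
set Q := \sum_(k < n) A (lift ord0 k) ^+ 2.
have Q0 : 0 <= Q by apply: sumr_ge0 => k _; exact: sqr_ge0.
have hA0 : 0 <= A ord0.
  have := hA (fun k => if k == ord0 then 1 else 0).
  rewrite big_ord_recl eqxx big1 => [|k _]; last first.
    by rewrite eq_sym (negbTE (neq_lift _ _)) mul0r.
  rewrite addr0 mul1r; apply; split; last by rewrite eqxx ltr01.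
  split; first by exists ord0; rewrite eqxx oner_neq0.
  rewrite /mdot big_ord_recl eqxx big1 => [|k _]; last first.
    by rewrite eq_sym (negbTE (neq_lift _ _)) !mulr0.
  by rewrite eta0 !mulr1 addr0 ler01.
have hQ : Q <= A ord0 ^+ 2.
  rewrite leNgt; apply/negP => hlt.
  pose x := if A ord0 == 0 then 1 else A ord0.
  have hx : 0 < x.
    rewrite /x; case: eqP => [_|h]; first exact: ltr01.
    by rewrite lt_def hA0 andbT; apply/eqP.
  have Qp : 0 < Q by apply: le_lt_trans hlt; exact: sqr_ge0.
  pose v (k : 'I_n.+1) := if k == ord0 then Q + x ^+ 2 else - (2 * x * A k).
  have vL k : v (lift ord0 k) = - (2 * x * A (lift ord0 k)).
    by rewrite /v eq_sym (negbTE (neq_lift _ _)).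
  have v0 : v ord0 = Q + x ^+ 2 by rewrite /v eqxx.
  have px : 0 < Q + x ^+ 2 by nra.
  have := hA v.
  rewrite big_ord_recl v0.
  rewrite (eq_bigr (fun k => - (2 * x) * A (lift ord0 k) ^+ 2)) => [|k _]; last first.
    by rewrite vL; ring.
  rewrite -mulr_sumr -/Q => h.
  have : 0 <= (Q + x ^+ 2) * A ord0 + - (2 * x) * Q.
    apply: h; split; last by rewrite v0.
    split; first by exists ord0; rewrite v0 gt_eqF.
    rewrite /mdot big_ord_recl v0 eta0.
    rewrite (eq_bigr (fun k => - (4 * x ^+ 2) * A (lift ord0 k) ^+ 2)) => [|k _]; last first.
      by rewrite vL etaL; ring.
    rewrite -mulr_sumr -/Q.
    have -> : 1 * (Q + x ^+ 2) * (Q + x ^+ 2) + - (4 * x ^+ 2) * Q = (Q - x ^+ 2) ^+ 2 by ring.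
    exact: sqr_ge0.
  rewrite /x; case: eqP => [->|h0] hh; first by nra.
  have a0 : 0 < A ord0 by rewrite lt_def hA0 andbT; apply/eqP.
  nra.
have [a00 | a0n] := eqVneq (A ord0) 0.
  have Q00 : Q = 0 by move: hQ; rewrite a00 => hQ; apply/eqP; rewrite eq_le Q0 andbT; nra.
  rewrite big_ord_recl a00 mulr0 mul0r add0r big1 // => k _.
  have := @psumr_eq0P _ _ _ (fun k => A (lift ord0 k) ^+ 2) (fun k _ => sqr_ge0 (A (lift ord0 k))) Q00 k isT.
  by move/eqP; rewrite sqrf_eq0 => /eqP ->; rewrite mulr0 mul0r.
have a0 : 0 < A ord0 by rewrite lt_def hA0 andbT.
pose a (b : 'I_n.+1) := eta R b * A b.
have := hB a.
rewrite (eq_bigr (fun b => eta R b * A b * B b)) => [|b _]; last by rewrite /a mulrC mulrA.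
apply; split; last by rewrite /a eta0 mul1r.
split; first by exists ord0; rewrite /a eta0 mul1r.
rewrite /mdot big_ord_recl /a eta0.
rewrite (eq_bigr (fun k => - A (lift ord0 k) ^+ 2)) => [|k _]; last first.
  by rewrite etaL; ring.
rewrite sumrN -/Q; lra.
Qed.

Definition cov (R : realFieldType) (n m : nat) (X : tensor R n m.+1) (i : 'I_m.+1)
  (u : 'I_m -> vec R n) (b : 'I_n.+1) : R :=
  \sum_(g : {ffun 'I_m -> 'I_n.+1}) X (ins i b g) * \prod_(k < m) u k (g k).

Lemma ins_ext (n m : nat) (i : 'I_m.+1) (b : 'I_n.+1) (g1 g2 : 'I_m -> 'I_n.+1) :
  g1 =1 g2 -> ins i b g1 = ins i b g2.
Proof. by move=> e; apply/ffunP => k; rewrite !ffunE; case: unlift => // k'; rewrite e. Qed.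

Lemma teval_ins (R : realFieldType) (n m : nat) (X : tensor R n m.+1) (i : 'I_m.+1)
  (u : 'I_m -> vec R n) (v : vec R n) :
  teval X (fun k => match unlift i k with None => v | Some k' => u k' end)
  = \sum_b v b * cov X i u b.
Proof.
rewrite /teval /cov.
pose h (p : 'I_n.+1 * {ffun 'I_m -> 'I_n.+1}) := ins i p.1 p.2.
pose h' (f : {ffun 'I_m.+1 -> 'I_n.+1}) := (f i, [ffun k => f (lift i k)]).
rewrite (reindex h); last first.
  exists h' => [[b g] _ | f _].
    rewrite /h /h' /= !ffunE unlift_none; congr pair; apply/ffunP => k.
    by rewrite !ffunE liftK.
  apply/ffunP => k; rewrite /h /h' /= !ffunE.
  by case: unliftP => [k'|] ->; rewrite ?ffunE.
rewrite -(pair_big xpredT xpredT (fun b g => X (h (b, g)) * \prod_(k < m.+1)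
   (match unlift i k with None => v | Some k' => u k' end) (h (b, g) k))) /=.
apply: eq_bigr => b _; rewrite mulr_sumr; apply: eq_bigr => g _.
rewrite (bigD1_ord i) //= /h ffunE unlift_none.
rewrite (eq_bigr (fun k => u k (g k))) => [|k _]; last by rewrite ffunE liftK.
by rewrite mulrCA.
Qed.

Lemma teval_tprod (R : realFieldType) (n r s : nat)
    (T : tensor R n r.+1) (t : tensor R n s.+1)
    (i : 'I_r.+1) (j : 'I_s.+1) (u : 'I_(r + s) -> vec R n) :
  teval (tprod T t i j) u = \sum_b eta R b * cov T i (fun k => u (lshift s k)) b
                                  * cov t j (fun k => u (rshift r k)) b.
Proof.
rewrite /teval /tprod.
pose h (p : {ffun 'I_r -> 'I_n.+1} * {ffun 'I_s -> 'I_n.+1}) : {ffun 'I_(r+s) -> 'I_n.+1} :=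
  [ffun k => match split k with inl a => p.1 a | inr c => p.2 c end].
pose h' (f : {ffun 'I_(r + s) -> 'I_n.+1}) :=
  ([ffun a => f (lshift s a)], [ffun c => f (rshift r c)]).
have hl p a : h p (lshift s a) = p.1 a.
  by rewrite /h ffunE (unsplitK (inl _ a)).
have hr p c : h p (rshift r c) = p.2 c.
  by rewrite /h ffunE (unsplitK (inr _ c)).
rewrite (reindex h); last first.
  exists h' => [[gL gR] _ | f _].
    by rewrite /h'; congr pair; apply/ffunP => k; rewrite ffunE ?hl ?hr.
  apply/ffunP => k; rewrite -[k]splitK; case: (split k) => a.
    by rewrite (hl (h' f) a) /h' /= ffunE.
  by rewrite (hr (h' f) a) /h' /= ffunE.
rewrite -(pair_big xpredT xpredT (fun gL gR =>
  (\sum_b eta R b * T (ins i b (fun k => h (gL, gR) (lshift s k)))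
       * t (ins j b (fun k => h (gL, gR) (rshift r k))))
  * \prod_(k < r + s) u k (h (gL, gR) k))) /=.
rewrite /cov.
transitivity (\sum_(gL : {ffun 'I_r -> 'I_n.+1}) \sum_(gR : {ffun 'I_s -> 'I_n.+1})
  \sum_b eta R b * (T (ins i b gL) * \prod_(k < r) u (lshift s k) (gL k))
     * (t (ins j b gR) * \prod_(k < s) u (rshift r k) (gR k))).
  apply: eq_bigr => gL _; apply: eq_bigr => gR _.
  rewrite big_distrl /=; apply: eq_bigr => b _.
  rewrite (ins_ext _ _ (hl (gL, gR))) (ins_ext _ _ (hr (gL, gR))).
  rewrite big_split_ord /=.
  have -> : \prod_(k < r) u (lshift s k) (h (gL, gR) (lshift s k)) = \prod_(k < r) u (lshift s k) (gL k).
    by apply: eq_bigr => k _; rewrite hl.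
  have -> : \prod_(k < s) u (rshift r k) (h (gL, gR) (rshift r k)) = \prod_(k < s) u (rshift r k) (gR k).
    by apply: eq_bigr => k _; rewrite hr.
  ring.
symmetry.
have E (b : 'I_n.+1) : eta R b * (\sum_(gL : {ffun 'I_r -> 'I_n.+1}) T (ins i b gL) * \prod_(k < r) u (lshift s k) (gL k))
   * (\sum_(gR : {ffun 'I_s -> 'I_n.+1}) t (ins j b gR) * \prod_(k < s) u (rshift r k) (gR k))
  = \sum_(gL : {ffun 'I_r -> 'I_n.+1}) \sum_(gR : {ffun 'I_s -> 'I_n.+1})
    eta R b * (T (ins i b gL) * \prod_(k < r) u (lshift s k) (gL k))
     * (t (ins j b gR) * \prod_(k < s) u (rshift r k) (gR k)).
  rewrite -mulrA big_distrl /= mulr_sumr; apply: eq_bigr => gL _.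
  rewrite mulr_sumr mulr_sumr; apply: eq_bigr => gR _; ring.
rewrite (eq_bigr _ (fun b _ => E b)).
rewrite exchange_big /=; apply: eq_bigr => gL _.
by rewrite exchange_big.
Qed.

Lemma teval_neg (R : realFieldType) (n m : nat) (X : tensor R n m) u :
  teval (fun f => - X f) u = - teval X u.
Proof. by rewrite /teval -sumrN; apply: eq_bigr => f _; rewrite mulNr. Qed.

Lemma cov_neg (R : realFieldType) (n m : nat) (X : tensor R n m.+1) i u b :
  cov (fun f => - X f) i u b = - cov X i u b.
Proof. by rewrite /cov -sumrN; apply: eq_bigr => f _; rewrite mulNr. Qed.

Lemma DPcov (R : realFieldType) (n m : nat) (X : tensor R n m.+1) (i : 'I_m.+1)
  (u : 'I_m -> vec R n) :
  DP X -> (forall k, future_causal (u k)) ->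
  forall v, future_causal v -> 0 <= \sum_b v b * cov X i u b.
Proof.
move=> hX hu v hv; rewrite -teval_ins; apply: hX => k.
by case: unlift.
Qed.

Theorem mainTheorem18 (R : realFieldType) (n r s : nat)
    (T : tensor R n r.+1) (t : tensor R n s.+1)
    (i : 'I_r.+1) (j : 'I_s.+1) :
  ((DP T /\ DP t) \/ (negDP T /\ negDP t) -> DP (tprod T t i j)) /\
  (DP T -> negDP t -> negDP (tprod T t i j) /\ negDP (tprod t T j i)).
Proof.
split.
  move=> H u hu; rewrite teval_tprod.
  have huL k : future_causal (u (lshift s k)) by [].
  have huR k : future_causal (u (rshift r k)) by [].
  case: H => [[hT ht]|[hT ht]].
    exact: key (DPcov i hT huL) (DPcov j ht huR).
  have := key (DPcov i hT huL) (DPcov j ht huR).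
  by under eq_bigr => b _ do rewrite !cov_neg !mulrN !mulNr !opprK.
move=> hT ht; split => u hu; rewrite teval_neg teval_tprod -sumrN.
  have huL k : future_causal (u (lshift s k)) by [].
  have huR k : future_causal (u (rshift r k)) by [].
  have := key (DPcov i hT huL) (DPcov j ht huR).
  by under eq_bigr => b _ do rewrite !cov_neg mulrN.
have huL k : future_causal (u (lshift r k)) by [].
have huR k : future_causal (u (rshift s k)) by [].
have := key (DPcov j ht huL) (DPcov i hT huR).
by under eq_bigr => b _ do rewrite !cov_neg !mulrN !mulNr.
Qed.
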